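(* Let $q$ be a prime power, $1\le t\le s$, and $M$ an invertible $s\times s$ matrix over $\mathbb{F}_q$. Then $\mathbf{y}=\mathbf{x}M^{-1}$ defines a linear $(t,t,s,q)$-AONT if and only if every $(s-t)\times(s-t)$ submatrix of $M^{-1}$ is invertible.
   Context: For a bijection $\phi:\Gamma^s\to\Gamma^s$ over an alphabet $\Gamma$ of size $v$, its array representation is the $v^s\times 2s$ array having, for each $\mathbf{x}\in\Gamma^s$, a row $(\mathbf{x},\phi(\mathbf{x}))$. An $N\times k$ array is unbiased with respect to a set $D$ of columns if the rows restricted to $D$ contain every $|D|$-tuple over $\Gamma$ exactly $N/v^{|D|}$ times. $\phi$ is a $(t,t,s,v)$-AONT if its array representation (columns labelled $1,\dots,2s$) is unbiased with respect to $\{1,\dots,s\}$, $\{s+1,\dots,2s\}$, and $I\cup J$ for every $I\subseteq\{1,\dots,s\}$ with $|I|=t$ and every $J\subseteq\{s+1,\dots,2s\}$ with $|J|=s-t$. The map $\mathbf{x}\mapsto\mathbf{x}M^{-1}$ on row vectors of $\mathbb{F}_q^s$ is a linear $(t,t,s,q)$-AONT if it is a $(t,t,s,q)$-AONT over $\Gamma=\mathbb{F}_q$. (By convention a $0\times 0$ matrix is invertible.) *)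

(* Defs.v *)
From mathcomp Require Import all_boot all_order all_algebra all_fingroup all_field.
Set Implicit Arguments. Unset Strict Implicit. Unset Printing Implicit Defensive.
Import GRing.Theory.
Local Open Scope ring_scope.

(* An N x k array over alphabet T, given as a family of rows indexed by a
   finite type R (so N = #|R|); row r is a row vector 'rV[T]_k. *)
Definition unbiased (T R : finType) (k : nat) (A : R -> 'rV[T]_k)
  (D : {set 'I_k}) : Prop :=
  forall g : 'rV[T]_k,
    #|[set r : R | [forall j in D, A r 0 j == g 0 j]]| = (#|R| %/ #|T| ^ #|D|)%N.

(* Array representation of phi : Gamma^s -> Gamma^s : row (x, phi x) for each x;
   columns 1..s are lshift s i, columns s+1..2s are rshift s i. *)
Definition array_rep (T : finType) (s : nat) (phi : 'rV[T]_s -> 'rV[T]_s)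
  : 'rV[T]_s -> 'rV[T]_(s + s) :=
  fun x => row_mx x (phi x).

Definition left_cols (s : nat) (I : {set 'I_s}) : {set 'I_(s + s)} :=
  [set lshift s i | i in I].
Definition right_cols (s : nat) (J : {set 'I_s}) : {set 'I_(s + s)} :=
  [set rshift s j | j in J].

Definition is_AONT (T : finType) (t s : nat) (phi : 'rV[T]_s -> 'rV[T]_s) : Prop :=
  [/\ bijective phi,
      unbiased (array_rep phi) (left_cols [set: 'I_s]),
      unbiased (array_rep phi) (right_cols [set: 'I_s]) &
      forall I J : {set 'I_s}, #|I| = t -> #|J| = (s - t)%N ->
        unbiased (array_rep phi) (left_cols I :|: right_cols J)].

(* Main.v *)
Require Import Defs.
From mathcomp Require Import all_boot all_order all_algebra all_fingroup all_field.
Set Implicit Arguments. Unset Strict Implicit. Unset Printing Implicit Defensive.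
Import GRing.Theory.
Local Open Scope ring_scope.

Lemma unbiased_inj (T : finType) s k (A : 'rV[T]_s -> 'rV[T]_k) (D : {set 'I_k}) :
  #|D| = s -> (0 < #|T|)%N ->
  unbiased A D <-> (forall x y, (forall j, j \in D -> A x 0 j = A y 0 j) -> x = y).
Proof.
move=> HD HT; rewrite /unbiased card_mx mul1n HD divnn expn_gt0 HT /=.
split.
  move=> H x y Hxy.
  have /eqP/cards1P [z Hz] := H (A x).
  have : x \in [set z] by rewrite -Hz inE; apply/forall_inP => j _.
  have : y \in [set z] by rewrite -Hz inE; apply/forall_inP => j Hj; rewrite Hxy.
  by rewrite !inE => /eqP -> /eqP ->.
move=> H g.
pose rho (x : 'rV[T]_s) : 'rV[T]_#|D| := \row_i A x 0 (enum_val i).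
have rhoE : forall x (h : 'rV[T]_k), [forall j in D, A x 0 j == h 0 j] =
    (rho x == \row_i h 0 (enum_val i)).
  move=> x h; apply/forall_inP/eqP.
    by move=> Hj; apply/rowP => i; rewrite !mxE; apply/eqP/Hj; apply: enum_valP.
  move=> Hr j Hj; apply/eqP.
  have := congr1 (fun v : 'rV[T]_#|D| => v 0 (enum_rank_in Hj j)) Hr.
  by rewrite !mxE enum_rankK_in.
have rinj : injective rho.
  move=> x y Hxy; apply: H => j Hj.
  have := congr1 (fun v : 'rV[T]_#|D| => v 0 (enum_rank_in Hj j)) Hxy.
  by rewrite !mxE enum_rankK_in.
have [rinv rK Kr] : bijective rho.
  by apply: inj_card_bij => //; rewrite !card_mx HD.
apply/eqP/cards1P; exists (rinv (\row_i g 0 (enum_val i))).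
apply/setP => x; rewrite !inE rhoE.
apply/eqP/eqP => [<-|->]; first by rewrite rK.
by rewrite Kr.
Qed.
Lemma card_LR s (I J : {set 'I_s}) :
  #|left_cols I :|: right_cols J| = (#|I| + #|J|)%N.
Proof.
rewrite cardsU /left_cols /right_cols !card_imset;
  try solve [exact: lshift_inj | exact: rshift_inj].
suff -> : [set lshift s i | i in I] :&: [set rshift s j | j in J] = set0.
  by rewrite cards0 subn0.
apply/setP => x; rewrite !inE; apply/negP => /andP [/imsetP [i _ ->] /imsetP [j _]].
move/(congr1 val) => /= E.
have := ltn_ord i; rewrite E; by rewrite ltnNge leq_addr.
Qed.

Lemma rowsub1E (F : fieldType) n s (f : 'I_n -> 'I_s) (u : 'rV[F]_n) k :
  (u *m rowsub f 1%:M) 0 k = \sum_i u 0 i * (f i == k)%:R.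
Proof. by rewrite mxE; apply: eq_bigr => i _; rewrite !mxE. Qed.

Lemma colsubE (F : fieldType) n s (f g : 'I_n -> 'I_s) (N : 'M[F]_s) (u : 'rV[F]_n) j :
  (u *m mxsub f g N) 0 j = (u *m rowsub f 1%:M *m N) 0 (g j).
Proof.
rewrite -mulmxA mul_rowsub_mx mul1mx !mxE; apply: eq_bigr => i _; by rewrite !mxE.
Qed.

Lemma kerA (F : fieldType) n s (f g : 'I_n -> 'I_s) (N : 'M[F]_s) (z : 'rV[F]_s) :
  injective f -> mxsub f g N \in unitmx ->
  (forall k, (forall i, f i != k) -> z 0 k = 0) ->
  (forall j, (z *m N) 0 (g j) = 0) -> z = 0.
Proof.
move=> fi Hu H1 H2.
pose u := \row_i z 0 (f i).
have zE : z = u *m rowsub f 1%:M.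
  apply/rowP => k; rewrite rowsub1E.
  case: (pickP (fun i => f i == k)) => [i /eqP <- | none].
    rewrite (bigD1 i) //= eqxx mulr1 mxE big1 ?addr0 // => i' ne.
    by rewrite (inj_eq fi) (negbTE ne) mulr0.
  rewrite H1 ?big1 // => i; first by rewrite none mulr0.
  by rewrite none.
have u0 : u *m mxsub f g N = 0.
  by apply/rowP => j; rewrite colsubE -zE H2 mxE.
have : u = 0 by rewrite -(mulmxK Hu u) u0 mul0mx.
by move=> u00; rewrite zE u00 mul0mx.
Qed.

Lemma kerB (F : fieldType) n s (f g : 'I_n -> 'I_s) (N : 'M[F]_s) :
  injective f ->
  (forall z : 'rV[F]_s, (forall k, (forall i, f i != k) -> z 0 k = 0) ->
  (forall j, (z *m N) 0 (g j) = 0) -> z = 0) -> mxsub f g N \in unitmx.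
Proof.
move=> fi H; rewrite unitmxE unitfE; apply/negP => /det0P [u nz Hu].
pose z := u *m rowsub f 1%:M.
have z0 : z = 0.
  apply: H => [k Hk|j].
    by rewrite rowsub1E big1 // => i _; rewrite (negbTE (Hk i)) mulr0.
  by rewrite -colsubE Hu mxE.
case/negP: nz; apply/eqP/rowP => i.
have := congr1 (fun v : 'rV[F]_s => v 0 (f i)) z0.
rewrite /= rowsub1E (bigD1 i) //= eqxx mulr1 big1 ?addr0 ?mxE // => i' ne.
by rewrite (inj_eq fi) (negbTE ne) mulr0.
Qed.

Theorem mainTheorem6 (F : finFieldType) (s t : nat) (M : 'M[F]_s) :
  (1 <= t <= s)%N -> M \in unitmx ->
  (is_AONT t (fun x : 'rV[F]_s => x *m invmx M) <->
   forall (f g : 'I_(s - t) -> 'I_s), injective f -> injective g ->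
     mxsub f g (invmx M) \in unitmx).
Proof.
move=> /andP [t1 ts] HM.
set N := invmx M.
have HF : (0 < #|F|)%N by apply/card_gt0P; exists 0.
split.
  case=> _ _ _ Hall f g fi gi.
  apply: kerB => // z H1 H2.
  pose I := ~: [set f i | i in 'I_(s - t)].
  pose J := [set g j | j in 'I_(s - t)].
  have HJ : #|J| = (s - t)%N by rewrite card_imset // card_ord.
  have HI : #|I| = t.
    rewrite cardsCs setCK card_imset // !card_ord; exact: subKn.
  have := Hall I J HI HJ.
  move/unbiased_inj; rewrite card_LR HI HJ subnKC //.
  move=> /(_ erefl HF z 0) -> // j /setUP [] /imsetP [i Hi ->].
    rewrite /array_rep !row_mxEl mxE H1 // => i'; apply/eqP => E.
    by move: Hi; rewrite !inE -E imset_f.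
  case/imsetP: Hi => j' _ ->.
  by rewrite /array_rep !row_mxEr H2 mul0mx mxE.
move=> H.
have Minj : injective (fun x : 'rV[F]_s => x *m N).
  by apply: (can_inj (g := fun y => y *m M)) => x; rewrite /N mulmxKV.
split.
- by exists (fun y => y *m M) => x; [rewrite /N mulmxKV | rewrite /N mulmxK].
- apply/unbiased_inj => //; first by rewrite card_imset ?cardsT ?card_ord //; exact: lshift_inj.
  move=> x y Hxy; apply/rowP => i.
  have := Hxy (lshift s i) (imset_f _ (in_setT i)).
  by rewrite /array_rep !row_mxEl.
- apply/unbiased_inj => //; first by rewrite card_imset ?cardsT ?card_ord //; exact: rshift_inj.
  move=> x y Hxy; apply: Minj; apply/rowP => i.
  have := Hxy (rshift s i) (imset_f _ (in_setT i)).
  by rewrite /array_rep !row_mxEr.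
move=> I J HI HJ.
apply/unbiased_inj => //; first by rewrite card_LR HI HJ subnKC.
move=> x y Hxy; apply/eqP; rewrite -subr_eq0; apply/eqP.
have HIc : #|~: I| = (s - t)%N by rewrite cardsCs setCK HI card_ord.
pose f := fun i : 'I_(s - t) => enum_val (cast_ord (esym HIc) i).
pose g := fun i : 'I_(s - t) => enum_val (cast_ord (esym HJ) i).
have fi : injective f.
  by move=> a b /enum_val_inj /cast_ord_inj.
have gi : injective g.
  by move=> a b /enum_val_inj /cast_ord_inj.
apply: (kerA (f := f) (g := g) (N := N)) => //.
- by apply: H.
- move=> k Hk.
  have kI : k \in I.
    apply/negPn/negP => Hc0.
    have Hc : k \in ~: I by rewrite inE.
    case/eqP: (Hk (cast_ord HIc (enum_rank_in Hc k))).
    by rewrite /f cast_ordK enum_rankK_in.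
  have := Hxy (lshift s k); rewrite /array_rep !row_mxEl !mxE => ->.
    by rewrite subrr.
  by rewrite inE; apply/orP; left; apply: imset_f.
- move=> j.
  have gJ : g j \in J by rewrite /g; apply: (enum_valP (A := mem J)).
  have := Hxy (rshift s (g j)); rewrite /array_rep !row_mxEr mulmxBl !mxE => ->.
    by rewrite subrr.
  by rewrite inE; apply/orP; right; apply: imset_f.
Qed.
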